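(* Let $d\ge1$ and let $G$ be a graph with a nonedge $f=uv$. Then $(G,f)$ has the $d$-SIP if and only if, for each atom $A$ of $G\cup f$ that contains both $u$ and $v$, the pair $(A\setminus f,f)$ has the $d$-SIP.
   Context: A linkage $(G,\ell)$: finite simple graph $G$ and $\ell:E(G)\to\mathbb{R}_{\ge0}$ (squared lengths). A $d$-realization is $p:V(G)\to\mathbb{R}^d$ with $\|p(a)-p(b)\|^2=\ell(ab)$ for all $ab\in E(G)$; $\mathcal{C}^d(G,\ell)$ is the set of these. For a nonedge $f=uv$, $\Omega^d_f(G,\ell)=\{\|p(u)-p(v)\|^2:p\in\mathcal{C}^d(G,\ell)\}$; $(G,f)$ has the $d$-SIP if $\Omega^d_f(G,\ell)$ is convex (empty or a closed interval) for every $\ell$. $G\cup f$ adds $f$ as an edge; $A\setminus f$ deletes the edge $f$. A clique is a set of pairwise adjacent vertices (possibly empty); a clique separator of $H$ is a clique $U$ such that $H-U$ has at least two connected components. A graph is an atom if it is nonempty and has no clique separator; an atom of $H$ is an induced subgraph of $H$ that is an atom and is vertex-maximal with this property. *)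

(* Defs.v *)
From HB Require Import structures.
From mathcomp Require Import all_boot all_order all_algebra.
From mathcomp Require Import reals.
Set Implicit Arguments. Unset Strict Implicit. Unset Printing Implicit Defensive.
Import Order.TTheory GRing.Theory Num.Theory.
Local Open Scope ring_scope.

(* A finite simple graph is a symmetric irreflexive relation g on a finType T;
   its vertex set is T.  Subgraphs are described by a vertex set W and an
   edge relation h (only pairs inside W are edges). *)

Definition sqdist (R : realType) (d : nat) (x y : 'rV[R]_d) : R :=
  \sum_(i < d) (x 0 i - y 0 i) ^+ 2.

Definition restr (T : finType) (W : {set T}) (h : rel T) : rel T :=
  fun a b => [&& a \in W, b \in W & h a b].

Definition add_edge (T : finType) (h : rel T) (u v : T) : rel T :=
  fun a b => h a b || ((a == u) && (b == v)) || ((a == v) && (b == u)).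

Definition del_edge (T : finType) (h : rel T) (u v : T) : rel T :=
  fun a b => h a b && ~~ (((a == u) && (b == v)) || ((a == v) && (b == u))).

Definition is_clique (T : finType) (h : rel T) (U : {set T}) : Prop :=
  forall a b, a \in U -> b \in U -> a != b -> h a b.

Definition clique_separator (T : finType) (h : rel T) (S U : {set T}) : Prop :=
  U \subset S /\ is_clique h U /\
  exists x y, x \in S :\: U /\ y \in S :\: U /\
              ~~ connect (restr (S :\: U) h) x y.

Definition is_atom (T : finType) (h : rel T) (S : {set T}) : Prop :=
  S != set0 /\ ~ (exists U, clique_separator h S U).

Definition atom_of (T : finType) (h : rel T) (S : {set T}) : Prop :=
  is_atom h S /\ forall S' : {set T}, S \subset S' -> is_atom h S' -> S' = S.

Definition Omega (R : realType) (d : nat) (T : finType) (W : {set T})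
  (h : rel T) (l : T -> T -> R) (u v : T) : R -> Prop :=
  fun x => exists p : T -> 'rV[R]_d,
    (forall a b, a \in W -> b \in W -> h a b -> sqdist (p a) (p b) = l a b) /\
    sqdist (p u) (p v) = x.

Definition convex_set (R : realType) (P : R -> Prop) : Prop :=
  forall x y z, P x -> P y -> x <= z <= y -> P z.

Definition SIP (R : realType) (d : nat) (T : finType) (W : {set T})
  (h : rel T) (u v : T) : Prop :=
  forall l : T -> T -> R, (forall a b, 0 <= l a b) -> (forall a b, l a b = l b a) ->
    convex_set (Omega d W h l u v).

(* Main.v *)
Require Import Defs.
From HB Require Import structures.
From mathcomp Require Import all_boot all_order all_algebra.
From mathcomp Require Import reals.
From mathcomp Require Import ring lra zify.
From Stdlib Require Import Classical.
Set Implicit Arguments. Unset Strict Implicit. Unset Printing Implicit Defensive.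
Import Order.TTheory GRing.Theory Num.Theory.
Section Geo.
Local Open Scope ring_scope.
Variables (R : realType) (d : nat).
Notation V := 'rV[R]_d.

Definition dot (x y : V) : R := \sum_(i < d) x 0 i * y 0 i.

Lemma dotC x y : dot x y = dot y x.
Proof. by apply: eq_bigr => i _; rewrite mulrC. Qed.
Lemma dotDl x y z : dot (x + y) z = dot x z + dot y z.
Proof. by rewrite /dot -big_split; apply: eq_bigr => i _; rewrite !mxE mulrDl. Qed.
Lemma dotNl x z : dot (- x) z = - dot x z.
Proof. by rewrite /dot -sumrN; apply: eq_bigr => i _; rewrite !mxE mulNr. Qed.
Lemma dotZl a x z : dot (a *: x) z = a * dot x z.
Proof. by rewrite /dot mulr_sumr; apply: eq_bigr => i _; rewrite !mxE mulrA. Qed.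
Lemma dotBl x y z : dot (x - y) z = dot x z - dot y z.
Proof. by rewrite dotDl dotNl. Qed.
Lemma dotDr x y z : dot z (x + y) = dot z x + dot z y.
Proof. by rewrite dotC dotDl !(dotC z). Qed.
Lemma dotBr x y z : dot z (x - y) = dot z x - dot z y.
Proof. by rewrite dotC dotBl !(dotC z). Qed.
Lemma dotNr x z : dot z (- x) = - dot z x.
Proof. by rewrite dotC dotNl dotC. Qed.
Lemma dotZr a x z : dot z (a *: x) = a * dot z x.
Proof. by rewrite dotC dotZl dotC. Qed.

Lemma sqdistE (x y : V) : sqdist x y = dot (x - y) (x - y).
Proof. by apply: eq_bigr => i _; rewrite !mxE expr2. Qed.
Lemma dot_ge0 (x : V) : 0 <= dot x x.
Proof. by apply: sumr_ge0 => i _; rewrite -expr2 sqr_ge0. Qed.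
Lemma dot_eq0 (x : V) : dot x x = 0 -> x = 0.
Proof.
move=> H; apply/rowP => i; rewrite mxE.
have := @psumr_eq0P _ _ xpredT (fun i => x 0 i * x 0 i) _ H i isT.
have h : forall i : 'I_d, xpredT i -> 0 <= x 0 i * x 0 i by move=> j _; rewrite -expr2 sqr_ge0.
by move=> /(_ h) /eqP; rewrite mulf_eq0 orbb => /eqP.
Qed.
Lemma sqdist_sym (x y : V) : sqdist x y = sqdist y x.
Proof. by rewrite !sqdistE -opprB dotNl dotNr opprK. Qed.
Lemma sqdist_ge0 (x y : V) : 0 <= sqdist x y.
Proof. by rewrite sqdistE dot_ge0. Qed.
Lemma sqdistxx (x : V) : sqdist x x = 0.
Proof. by rewrite sqdistE subrr /dot big1 // => i _; rewrite mxE mul0r. Qed.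

Definition refl (a b x : V) : V :=
  if a == b then x else
  x - ((2 * dot (x - 2^-1 *: (a + b)) (a - b)) / dot (a - b) (a - b)) *: (a - b).

Lemma dot_expand w n s :
  dot (w - s *: n) (w - s *: n) = dot w w - 2 * s * dot w n + s ^+ 2 * dot n n.
Proof. rewrite !(dotBl, dotBr, dotZl, dotZr) (dotC n w); ring. Qed.

Lemma refl_isom (a b x y : V) : sqdist (refl a b x) (refl a b y) = sqdist x y.
Proof.
rewrite /refl; case: eqP => // /eqP ab.
have N0 : dot (a - b) (a - b) != 0.
  by apply/eqP => /dot_eq0/eqP; rewrite subr_eq0 (negbTE ab).
set n := a - b; set c := 2^-1 *: (a + b).
set N := dot n n.
rewrite !sqdistE.
set sx := 2 * dot (x - c) n / N; set sy := 2 * dot (y - c) n / N.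
have -> : x - sx *: n - (y - sy *: n) = (x - y) - (sx - sy) *: n.
  by apply/rowP => i; rewrite !mxE; ring.
have -> : sx - sy = 2 * dot (x - y) n / N.
  by rewrite /sx /sy !dotBl; field.
rewrite (dot_expand (x - y) n); rewrite -/N; field; exact: N0.
Qed.

Lemma refl_ab (a b : V) : refl a b a = b.
Proof.
rewrite /refl; case: eqP => // /eqP ab.
have N0 : dot (a - b) (a - b) != 0.
  by apply/eqP => /dot_eq0/eqP; rewrite subr_eq0 (negbTE ab).
have -> : 2 * dot (a - 2^-1 *: (a + b)) (a - b) / dot (a - b) (a - b) = 1.
  have -> : a - 2^-1 *: (a + b) = 2^-1 *: (a - b).
    by apply/rowP => i; rewrite !mxE; field.
  by rewrite dotZl; field.
by rewrite scale1r opprB addrC subrK.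
Qed.

Lemma refl_fix (a b x : V) : sqdist x a = sqdist x b -> refl a b x = x.
Proof.
rewrite /refl; case: eqP => // /eqP ab.
rewrite !sqdistE => E.
have -> : dot (x - 2^-1 *: (a + b)) (a - b) = 0.
  move: E; rewrite !(dotBl, dotBr, dotDl, dotDr, dotNl, dotNr, dotZl, dotZr) ?(dotC a x) ?(dotC b x) ?(dotC b a) => E.
  lra.
by rewrite mulr0 mul0r scale0r subr0.
Qed.

Definition isom (f : V -> V) := forall x y, sqdist (f x) (f y) = sqdist x y.

Lemma congr_ext (T : finType) (K : {set T}) (p q : T -> V) :
  (forall a b, a \in K -> b \in K -> sqdist (p a) (p b) = sqdist (q a) (q b)) ->
  exists f, isom f /\ forall a, a \in K -> f (p a) = q a.
Proof.
move=> Hd.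
suff: forall n f, isom f -> (#|[set a in K | f (p a) != q a]| <= n)%N ->
  exists f, isom f /\ forall a, a \in K -> f (p a) = q a.
  by move/(_ #|T| id (fun x y => erefl)); apply; rewrite max_card.
elim=> [|n IH] f If.
  rewrite leqn0 cards_eq0 => /eqP E; exists f; split => // a aK.
  apply/eqP; apply: contraT => ne.
  have : a \in [set a in K | f (p a) != q a] by rewrite inE aK ne.
  by rewrite E inE.
case: (set_0Vmem [set a in K | f (p a) != q a]) => [E _|[a]].
  exists f; split => // b bK; apply/eqP; apply: contraT => ne.
  have : b \in [set a in K | f (p a) != q a] by rewrite inE bK ne.
  by rewrite E inE.
rewrite inE => /andP [aK ne] Hc.
apply: (IH (fun x => refl (f (p a)) (q a) (f x))).
  by move=> x y; rewrite refl_isom If.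
have sub : [set b in K | refl (f (p a)) (q a) (f (p b)) != q b] \subset
           [set b in K | f (p b) != q b] :\ a.
  apply/subsetP => b; rewrite !inE => /andP [bK nb]; rewrite bK /=.
  apply/andP; split.
    by apply: contraNneq nb => ->; rewrite refl_ab.
  apply: contra nb => /eqP eb; apply/eqP; rewrite eb.
  by apply: refl_fix; rewrite -{1}eb If Hd.
apply: leq_trans (subset_leq_card sub) _.
rewrite (cardsD1 a) inE aK ne /= add1n in Hc.
by [].
Qed.
End Geo.
Section Graph.
Variables (T : finType) (H : rel T).
Hypothesis Hsym : symmetric H.
Implicit Types (S X A B M Z D : {set T}) (x y w a b c : T).

Lemma restr_sym S : symmetric (restr S H).
Proof. by move=> a b; rewrite /restr Hsym andbCA. Qed.

Lemma connect_restr_sym S x y : connect (restr S H) x y = connect (restr S H) y x.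
Proof. exact: (sym_connect_sym (restr_sym S)). Qed.

Lemma connect_restr_mono S (S' : {set T}) x y : S \subset S' ->
  connect (restr S H) x y -> connect (restr S' H) x y.
Proof.
move=> sub; apply: connect_sub => a b /and3P [aS bS hab]; apply: connect1.
by rewrite /restr (subsetP sub a aS) (subsetP sub b bS) hab.
Qed.

Lemma connect_restr_in S x y : connect (restr S H) x y -> x \in S -> y \in S.
Proof.
move=> /connectP [p pth ->]; elim: p x pth => //= z p IH x /andP [/and3P [_ zS _] pz] _.
exact: IH.
Qed.

Definition reach S x := [set y | connect (restr S H) x y].

Lemma reach_id S x : x \in reach S x.
Proof. by rewrite inE connect0. Qed.

Lemma reach_sub S x : x \in S -> reach S x \subset S.
Proof. by move=> xS; apply/subsetP => y; rewrite inE => /connect_restr_in; apply. Qed.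

Lemma reach_closed S x w w' : x \in S -> w \in reach S x -> w' \in S -> H w w' ->
  w' \in reach S x.
Proof.
move=> xS wR w'S h; rewrite inE; apply: connect_trans (_ : connect _ x w) _.
  by rewrite inE in wR.
by apply: connect1; rewrite /restr w'S h (subsetP (reach_sub xS) w wR).
Qed.

Definition conn S := forall x y, x \in S -> y \in S -> connect (restr S H) x y.

Lemma reach_path S x y : connect (restr S H) x y -> connect (restr (reach S x) H) x y.
Proof.
move=> /connectP [p pth ->]; elim/last_ind: p pth => [//|p z IH].
rewrite rcons_path last_rcons => /andP [pp e].
apply: connect_trans (IH pp) _; apply: connect1.
move: e => /and3P [lS zS h].
have cl : connect (restr S H) x (last x p) by apply/connectP; exists p.
rewrite /restr h andbT !inE cl /=.
by apply: connect_trans cl _; apply: connect1; rewrite /restr lS zS h.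
Qed.

Lemma reach_conn S x : conn (reach S x).
Proof.
move=> y z; rewrite !inE => /reach_path cy /reach_path cz.
by apply: connect_trans cz; rewrite connect_restr_sym.
Qed.

Lemma cut S (X : {set T}) x y : connect (restr S H) x y -> x \in X -> y \notin X ->
  exists w w', [/\ w \in X, w' \notin X, w \in S, w' \in S & H w w'].
Proof.
move=> /connectP [p pth ->]; elim: p x pth => [|z p IH] x /=; first by move=> _ ->.
move=> /andP [/and3P [xS zS hxz] pz] xX lX.
case zX: (z \in X); first exact: IH pz zX lX.
by exists x, z; rewrite zX.
Qed.

Lemma atom_conn B Z : is_atom H B -> is_clique H Z ->
  forall x y, x \in B :\: Z -> y \in B :\: Z -> connect (restr (B :\: Z) H) x y.
Proof.
move=> [_ nosep] cZ x y xB yB; apply/negPn/negP => nc; apply: nosep.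
have E : B :\: (Z :&: B) = B :\: Z.
  by apply/setP => w; rewrite !inE; case: (w \in Z); case: (w \in B).
exists (Z :&: B); split; first exact: subsetIr.
split; first by move=> a b; rewrite !inE => /andP [aZ _] /andP [bZ _]; apply: cZ.
by exists x, y; rewrite E.
Qed.

Definition cand (B : {set T}) a b (M : {set T}) :=
  [/\ M \subset ~: B, conn M, exists2 m, m \in M & H m a & exists2 m, m \in M & H m b].

Section Ext.
Variables (B : {set T}) (a b : T).
Hypotheses (Ba : is_atom H B) (aB : a \in B) (bB : b \in B) (ab : a != b) (nab : ~~ H a b).

Lemma ext_key M Z y :
  cand B a b M -> Z \subset B :|: M -> is_clique H Z ->
  y \in (B :|: M) :\: Z ->
  (forall w, w \in reach ((B :|: M) :\: Z) y -> w \notin B) ->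
  exists M', cand B a b M' /\ (#|M'| < #|M|)%N.
Proof.
move=> [MB Mc [m1 m1M hm1] [m2 m2M hm2]] ZS cZ yS DB.
set S := B :|: M; set D := reach (S :\: Z) y.
have DS : D \subset S :\: Z by apply: reach_sub.
have DM : forall w, w \in D -> w \in M.
  move=> w wD; have := subsetP DS w wD; rewrite !inE => /andP [_ /orP [wB|//]].
  by have := DB w wD; rewrite wB.
have Dcl : forall w w', w \in D -> w' \in S :\: Z -> H w w' -> w' \in D.
  by move=> w w' wD w'S h; apply: (reach_closed yS wD w'S h).
have kZ : forall k, k \in B -> forall w, w \in D -> H w k -> k \in Z.
  move=> k kB w wD h; apply/negPn/negP => kZ.
  have kD : k \in D by apply: (Dcl w) => //; rewrite !inE kZ kB.
  by have := DB k kD; rewrite kB.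
have MnB : forall w, w \in M -> w \notin B.
  by move=> w wM; have := subsetP MB w wM; rewrite inE.
set M' := M :\: D.
have yD : y \in D by apply: reach_id.
have reachZ : forall w, w \in M' -> exists2 z, z \in M :&: Z & z \in M' /\ connect (restr M' H) w z.
  move=> w wM'.
  have wM : w \in M by move: wM'; rewrite inE => /andP [].
  have yR : y \notin reach M' w.
    by apply/negP => /(subsetP (reach_sub wM')); rewrite inE yD.
  have [w1 [w2 [w1X w2X w1M w2M h12]]] := cut (Mc w y wM (DM y yD)) (reach_id M' w) yR.
  have w1M' : w1 \in M' by apply: (subsetP (reach_sub wM')).
  have w2D : w2 \in D.
    apply/negPn/negP => w2D; move/negP: w2X; apply.
    by apply: (reach_closed wM' w1X _ h12); rewrite inE w2D.
  have w1Z : w1 \in Z.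
    apply/negPn/negP => w1Z.
    have : w1 \in D.
      apply: (Dcl w2) => //; first by rewrite !inE w1Z w1M orbT.
      by rewrite Hsym.
    by move: w1M'; rewrite inE => /andP [/negP].
  by exists w1; [rewrite inE w1M | split => //; rewrite inE in w1X].
have [w0 w0M'] : exists w0, w0 \in M'.
  apply: NNPP => nM0.
  have nM : forall m, m \in M' -> False by move=> m mM; apply: nM0; exists m.
  have aZ : a \in Z.
    apply: (kZ a aB m1) => //; apply/negPn/negP => m1D.
    by apply: (nM m1); rewrite inE m1D m1M.
  have bZ : b \in Z.
    apply: (kZ b bB m2) => //; apply/negPn/negP => m2D.
    by apply: (nM m2); rewrite inE m2D m2M.
  by move/negP: nab; apply; apply: cZ.
have [z0 z0MZ [z0M' _]] := reachZ w0 w0M'.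
have adj : forall k, k \in B -> (exists2 m, m \in M & H m k) -> exists2 m, m \in M' & H m k.
  move=> k kB [m mM hm].
  case mD: (m \in D); last by exists m; rewrite // inE mD mM.
  have kZ' := kZ k kB m mD hm.
  exists z0 => //; move: z0MZ; rewrite inE => /andP [z0M z0Z].
  apply: cZ => //; apply/eqP => e; have := MnB z0 z0M; rewrite e kB //.
exists M'; split; last first.
  apply: proper_card; apply/properP; split; first exact: subsetDl.
  by exists y; [apply: DM | rewrite inE yD].
split.
- by apply: subset_trans MB; apply: subsetDl.
- move=> x1 x2 x1M x2M.
  have [z1 z1MZ [z1M c1]] := reachZ x1 x1M.
  have [z2 z2MZ [z2M c2]] := reachZ x2 x2M.
  apply: connect_trans c1 _; rewrite connect_restr_sym; apply: connect_trans c2 _.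
  case: (eqVneq z2 z1) => [->|ne]; first exact: connect0.
  apply: connect1; rewrite /restr z1M z2M /=; apply: cZ => //.
    by move: z2MZ; rewrite inE => /andP [].
  by move: z1MZ; rewrite inE => /andP [].
- by apply: adj => //; exists m1.
- by apply: adj => //; exists m2.
Qed.

Lemma ext_step M Z : cand B a b M -> clique_separator H (B :|: M) Z ->
  exists M', cand B a b M' /\ (#|M'| < #|M|)%N.
Proof.
move=> cM [ZS [cZ [x [y [xS [yS nxy]]]]]].
case: (classic (exists w, w \in reach ((B :|: M) :\: Z) y /\ w \in B)) => [[w1 [w1R w1B]]|ny];
  last first.
  apply: (ext_key cM ZS cZ yS) => w wR; apply/negP => wB; apply: ny; by exists w.
case: (classic (exists w, w \in reach ((B :|: M) :\: Z) x /\ w \in B)) => [[w2 [w2R w2B]]|nx];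
  last first.
  apply: (ext_key cM ZS cZ xS) => w wR; apply/negP => wB; apply: nx; by exists w.
exfalso; move/negP: nxy; apply.
have w1S := subsetP (reach_sub yS) _ w1R; have w2S := subsetP (reach_sub xS) _ w2R.
have c12 : connect (restr ((B :|: M) :\: Z) H) w2 w1.
  apply: connect_restr_mono (atom_conn Ba cZ _ _).
    by apply: setSD; apply: subsetUl.
    by rewrite inE w2B andbT; move: w2S; rewrite inE => /andP [].
  by rewrite inE w1B andbT; move: w1S; rewrite inE => /andP [].
rewrite inE in w1R; rewrite inE in w2R.
apply: connect_trans w2R _; apply: connect_trans c12 _.
by rewrite connect_restr_sym.
Qed.

Lemma ext_atom M : cand B a b M -> exists M', cand B a b M' /\ is_atom H (B :|: M').
Proof.
suff: forall n M, (#|M| < n)%N -> cand B a b M ->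
  exists M', cand B a b M' /\ is_atom H (B :|: M') by apply; apply: ltnSn.
elim=> [//|n IH] {}M lt cM.
case: (classic (exists Z, clique_separator H (B :|: M) Z)) => [[Z sep]|nsep].
  have [M' [cM' lt']] := ext_step cM sep.
  by apply: (IH M') => //; apply: leq_trans lt' _.
exists M; split => //; split => //.
by apply/set0Pn; exists a; rewrite inE aB.
Qed.
End Ext.

Definition Nb (A : {set T}) c := [set a in A | [exists y in reach (~: A) c, H y a]].

Lemma nbr_clique A c a b : atom_of H A -> c \notin A -> a \in Nb A c -> b \in Nb A c ->
  a != b -> H a b.
Proof.
move=> [Aa Amax] cA aN bN ab; apply/negPn/negP => nab.
move: aN bN; rewrite !inE => /andP [aA /existsP [m1 /andP [m1R h1]]]
  /andP [bA /existsP [m2 /andP [m2R h2]]].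
have cA' : c \in ~: A by rewrite inE.
have cM : cand A a b (reach (~: A) c).
  split; [exact: reach_sub | exact: reach_conn | by exists m1 | by exists m2].
have [M' [[M'A _ [m mM _] _] At]] := ext_atom Aa aA bA ab nab cM.
have E := Amax _ (subsetUl A M') At.
have : m \in A by rewrite -E inE mM orbT.
by have := subsetP M'A m mM; rewrite inE => /negP.
Qed.
End Graph.
Section Main.
Local Open Scope ring_scope.
Variables (R : realType) (d : nat) (T : finType) (g : rel T) (u v : T).
Hypotheses (d1 : (1 <= d)%N) (gsym : symmetric g) (uv : u != v) (nguv : ~~ g u v).
Notation V := 'rV[R]_d.
Notation Hg := (add_edge g u v).
Implicit Types (W A U C S : {set T}) (l : T -> T -> R).

Lemma Hg_sym : symmetric Hg.
Proof.
move=> a b; rewrite /add_edge gsym.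
by case: (a == u); case: (b == v); case: (a == v); case: (b == u); rewrite /= ?orbT ?orbF.
Qed.

Lemma Hg_g a b : g a b -> Hg a b.
Proof. by rewrite /add_edge => ->. Qed.

Lemma Hg_uv : Hg u v.
Proof. by rewrite /add_edge !eqxx /= orbT. Qed.

Lemma del_addE a b : del_edge Hg u v a b = g a b.
Proof.
rewrite /del_edge /add_edge -orbA.
case E: ((a == u) && (b == v) || (a == v) && (b == u)); last by rewrite orbF andbT.
rewrite orbT andbF; move: E => /orP [/andP [/eqP -> /eqP ->]|/andP [/eqP -> /eqP ->]].
  by rewrite (negbTE nguv).
by rewrite gsym (negbTE nguv).
Qed.

Lemma Hg_notg a b : Hg a b -> ~~ g a b -> (a == u) && (b == v) || (a == v) && (b == u).
Proof. by rewrite /add_edge -orbA => /orP [->|]. Qed.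

Lemma Omega_ext W (h1 h2 : rel T) l z : (forall a b, h1 a b = h2 a b) ->
  Omega d W h1 l u v z -> Omega d W h2 l u v z.
Proof. by move=> E [p [Hp pz]]; exists p; split => // a b aW bW; rewrite -E; apply: Hp. Qed.

Lemma Omega_sub W W' (h : rel T) l z : W' \subset W ->
  Omega d W h l u v z -> Omega d W' h l u v z.
Proof.
by move=> sub [p [Hp pz]]; exists p; split => // a b aW bW; apply: Hp; apply: (subsetP sub).
Qed.

Definition Real l W (p : T -> V) :=
  forall a b, a \in W -> b \in W -> g a b -> sqdist (p a) (p b) = l a b.

Definition maxatom W A := [/\ is_atom Hg A, A \subset W &
  forall S, A \subset S -> S \subset W -> is_atom Hg S -> S = A].

Lemma maxatom_ext W A : is_atom Hg A -> A \subset W -> exists A', maxatom W A' /\ A \subset A'.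
Proof.
suff: forall n A, (#|W| - #|A| < n)%N -> is_atom Hg A -> A \subset W ->
  exists A', maxatom W A' /\ A \subset A' by apply; apply: ltnSn.
elim=> [//|n IH] {}A lt At AW.
case: (classic (exists S, [/\ A \subset S, S \subset W, is_atom Hg S & S <> A])) =>
  [[S [AS SW St SA]]|nS].
  have [A' [mA' SA']] : exists A', maxatom W A' /\ S \subset A'.
    apply: IH => //.
    have pr : A \proper S by rewrite properEneq AS andbT; apply/eqP => E; apply: SA.
    have := proper_card pr; have := subset_leq_card SW.
    by move: lt; clear; lia.
  by exists A'; split => //; apply: subset_trans SA'.
exists A; split => //; split => // S AS SW St.
by apply: NNPP => SA; apply: nS; exists S.
Qed.

Lemma maxatom_T A : maxatom [set: T] A <-> atom_of Hg A.
Proof.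
split => [[At _ mx]|[At mx]]; first by split => // S AS St; apply: mx => //; apply: subsetT.
split => // S AS _ St; exact: mx.
Qed.

Lemma glue_main W l (p : T -> V) z : u \in W -> v \in W -> Real l W p ->
  (forall A, is_atom Hg A -> A \subset W -> u \in A -> v \in A -> Omega d A g l u v z) ->
  Omega d W g l u v z.
Proof.
suff: forall n W, (#|W| < n)%N -> u \in W -> v \in W -> forall p, Real l W p ->
  (forall A, is_atom Hg A -> A \subset W -> u \in A -> v \in A -> Omega d A g l u v z) ->
  Omega d W g l u v z by move=> h uW vW Rp HA; exact: (h _ W (ltnSn _) uW vW p Rp HA).
elim=> [//|n IH] {}W lt uW vW {}p Rp HA.
case: (classic (exists U, clique_separator Hg W U)) => [[U [UW [cU [x0 [y0 [x0S [y0S nc]]]]]]]|nsep];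
  last first.
  apply: HA => //; split; last exact: nsep.
  by apply/set0Pn; exists u.
have symH := Hg_sym.
have [c0 [c1 [c0S c1S c1C uC vC]]] : exists c0 c1, [/\ c0 \in W :\: U, c1 \in W :\: U,
    c1 \notin reach Hg (W :\: U) c0, u \notin reach Hg (W :\: U) c0 &
    v \notin reach Hg (W :\: U) c0].
  have nc' : ~~ connect (restr (W :\: U) Hg) y0 x0 by rewrite (connect_restr_sym symH).
  have bad : forall w w', w \in reach Hg (W :\: U) x0 -> w' \in reach Hg (W :\: U) y0 ->
      (w = w' \/ Hg w w') -> False.
    move=> w w' wR w'R E; move/negP: nc; apply.
    have wS := subsetP (reach_sub _ x0S) w wR.
    have w'S := subsetP (reach_sub _ y0S) w' w'R.
    rewrite inE in wR; rewrite inE in w'R.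
    apply: connect_trans wR _; rewrite (connect_restr_sym symH); apply: connect_trans w'R _.
    case: E => [->|h]; first exact: connect0.
    by rewrite (connect_restr_sym symH); apply: connect1; rewrite /restr h wS w'S.
  case: (boolP ((u \notin reach Hg (W :\: U) x0) && (v \notin reach Hg (W :\: U) x0))) => [/andP [ux vx]|hx].
    by exists x0, y0; split => //; rewrite inE.
  case: (boolP ((u \notin reach Hg (W :\: U) y0) && (v \notin reach Hg (W :\: U) y0))) => [/andP [uy vy]|hy].
    by exists y0, x0; split => //; rewrite inE.
  exfalso; move: hx hy; rewrite !negb_and !negbK.
  have huv := Hg_uv; have hvu : Hg v u by rewrite symH.
  case/orP => hx; case/orP => hy.
  - exact: (bad u u hx hy (or_introl erefl)).
  - exact: (bad u v hx hy (or_intror huv)).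
  - exact: (bad v u hx hy (or_intror hvu)).
  - exact: (bad v v hx hy (or_introl erefl)).
set C := reach Hg (W :\: U) c0.
have CS : C \subset W :\: U by apply: reach_sub.
have CW : forall w, w \in C -> w \in W by move=> w /(subsetP CS); rewrite inE => /andP [].
have CU : forall w, w \in C -> w \notin U by move=> w /(subsetP CS); rewrite inE => /andP [].
have cross : forall a b, a \in C -> b \in W -> b \notin C -> b \notin U -> ~~ Hg a b.
  move=> a b aC bW bC bU; apply/negP => h; move/negP: bC; apply.
  by apply: (reach_closed c0S aC) => //; rewrite inE bU.
set W1 := W :\: C; set W2 := C :|: U.
have W1W : W1 \subset W by apply: subsetDl.
have W2W : W2 \subset W.
  by apply/subsetP => w; rewrite inE => /orP [/CW //|/(subsetP UW)].
have UW1 : U \subset W1.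
  apply/subsetP => w wU; rewrite inE (subsetP UW w wU) andbT.
  by apply/negP => /CU; rewrite wU.
have c0C : c0 \in C by apply: reach_id.
have c0W : c0 \in W by move: c0S; rewrite inE => /andP [].
have uW1 : u \in W1 by rewrite inE uC uW.
have vW1 : v \in W1 by rewrite inE vC vW.
have lt1 : (#|W1| < n)%N.
  suff: (#|W1| < #|W|)%N by move=> h; rewrite ltnS in lt; exact: leq_trans h lt.
  apply: proper_card; apply/properP; split => //.
  by exists c0 => //; rewrite inE c0C.
have lt2 : (#|W2| < n)%N.
  suff: (#|W2| < #|W|)%N by move=> h; rewrite ltnS in lt; exact: leq_trans h lt.
  apply: proper_card; apply/properP; split => //.
  exists c1; first by move: c1S; rewrite inE => /andP [].
  by rewrite inE negb_or c1C; move: c1S; rewrite inE => /andP [].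
have RW : forall W', W' \subset W -> Real l W' p.
  by move=> W' sub a b aW bW; apply: Rp; apply: (subsetP sub).
have HAW : forall W', W' \subset W -> forall A, is_atom Hg A -> A \subset W' -> u \in A -> v \in A ->
    Omega d A g l u v z.
  by move=> W' sub A At AW'; apply: HA => //; apply: subset_trans sub.
have [q1 [Rq1 q1z]] := IH W1 lt1 uW1 vW1 p (RW W1 W1W) (HAW W1 W1W).
have [q2 [Rq2 q2z]] : exists q2, Real l W2 q2 /\ (u \in U -> v \in U -> sqdist (q2 u) (q2 v) = z).
  case: (boolP ((u \in U) && (v \in U))) => [/andP [uU vU]|nuv].
    have uW2 : u \in W2 by rewrite inE uU orbT.
    have vW2 : v \in W2 by rewrite inE vU orbT.
    have [q2 [Rq2 q2z]] := IH W2 lt2 uW2 vW2 p (RW W2 W2W) (HAW W2 W2W).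
    by exists q2.
  exists p; split; first exact: RW.
  by move=> uU vU; move: nuv; rewrite uU vU.
have cong : forall a b, a \in U -> b \in U -> sqdist (q2 a) (q2 b) = sqdist (q1 a) (q1 b).
  move=> a b aU bU.
  case: (eqVneq a b) => [->|ab]; first by rewrite !sqdistxx.
  have h := cU a b aU bU ab.
  have aW2 : a \in W2 by rewrite inE aU orbT.
  have bW2 : b \in W2 by rewrite inE bU orbT.
  case gab: (g a b); first by rewrite Rq2 // Rq1 // (subsetP UW1).
  move: (Hg_notg h); rewrite gab => /(_ isT) /orP [/andP [/eqP ea /eqP eb]|/andP [/eqP ea /eqP eb]];
    subst a b.
    by rewrite q2z // q1z.
  by rewrite sqdist_sym q2z // sqdist_sym q1z.
have [f [If fq]] := congr_ext cong.
exists (fun c => if c \in C then f (q2 c) else q1 c); split; last by rewrite (negbTE uC) (negbTE vC).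
move=> a b aW bW gab.
have hab := Hg_g gab.
have W2C : forall w, w \in C -> w \in W2 by move=> w wC; rewrite inE wC.
case aC: (a \in C); case bC: (b \in C).
- by rewrite If; apply: Rq2 => //; apply: W2C.
- case bU: (b \in U).
    rewrite -(fq b bU) If; apply: Rq2 => //; [exact: W2C | by rewrite inE bU orbT].
  by have := cross a b aC bW (negbT bC) (negbT bU); rewrite hab.
- case aU: (a \in U).
    rewrite -(fq a aU) If; apply: Rq2 => //; [by rewrite inE aU orbT | exact: W2C].
  by have := cross b a bC aW (negbT aC) (negbT aU); rewrite symH hab.
- by apply: Rq1 => //; rewrite inE ?aC ?bC ?aW ?bW.
Qed.
End Main.
Section Forward.
Local Open Scope ring_scope.
Variables (R : realType) (d : nat) (T : finType) (g : rel T) (u v : T).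
Hypotheses (d1 : (0 < d)%N) (gsym : symmetric g) (uv : u != v) (nguv : ~~ g u v).
Notation V := 'rV[R]_d.
Notation Hg := (add_edge g u v).

Definition i0 : 'I_d := Ordinal d1.
Definition e0 : V := delta_mx 0 i0.

Lemma e0n : dot e0 e0 = 1.
Proof.
rewrite /dot (bigD1 i0) //= big1 => [|i ne]; rewrite !mxE ?eqxx /=.
  by rewrite mulr1 addr0.
by rewrite (negbTE ne) mulr0.
Qed.

Lemma addsub (x w : V) : x + w - x = w.
Proof. by apply/rowP => i; rewrite !mxE; ring. Qed.

Definition qpt (pu pv : V) (r : R) : V :=
  if Num.sqrt (sqdist pu pv) == 0 then pu + r *: e0
  else pu + (r / Num.sqrt (sqdist pu pv)) *: (pv - pu).

Lemma qpt_u pu pv r : sqdist (qpt pu pv r) pu = r ^+ 2.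
Proof.
rewrite /qpt; case: eqP => [_|/eqP t0]; rewrite sqdistE addsub dotZl dotZr.
  by rewrite e0n mulr1 expr2.
rewrite -sqdistE (sqdist_sym pv pu).
have := sqr_sqrtr (sqdist_ge0 pu pv).
move: t0; set t := Num.sqrt _ => t0 E.
rewrite -E; field.
exact: t0.
Qed.

Lemma qpt_v pu pv r : sqdist (qpt pu pv r) pv = (r - Num.sqrt (sqdist pu pv)) ^+ 2.
Proof.
rewrite /qpt; case: eqP => [t0|/eqP t0].
  have D0 : sqdist pu pv = 0.
    apply/eqP; rewrite eq_le sqdist_ge0 andbT -sqrtr_eq0; exact/eqP.
  have : pu = pv by apply/eqP; rewrite -subr_eq0; apply/eqP; apply: dot_eq0; rewrite -sqdistE.
  move=> E; rewrite t0 subr0 -E sqdistE addsub dotZl dotZr e0n mulr1 expr2 //.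
have EE : pu + (r / Num.sqrt (sqdist pu pv)) *: (pv - pu) - pv =
   (1 - r / Num.sqrt (sqdist pu pv)) *: (pu - pv).
  by apply/rowP => i; rewrite !mxE; ring.
rewrite sqdistE EE.
rewrite dotZl dotZr -sqdistE.
have := sqr_sqrtr (sqdist_ge0 pu pv).
move: t0; set t := Num.sqrt _ => t0 E.
rewrite -E; field.
exact: t0.
Qed.

Section F2.
Variables (A : {set T}) (l : T -> T -> R) (px py : T -> V).
Hypotheses (Aat : atom_of Hg A) (uA : u \in A) (vA : v \in A)
  (Rx : Real g l A px) (Ry : Real g l A py).

Definition r1 := (Num.sqrt (sqdist (px u) (px v)) + Num.sqrt (sqdist (py u) (py v))) / 2.

Definition place (p : T -> V) (K : {set T}) : V :=
  if [pick w in K | (w != u) && (w != v)] is Some w then p w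
  else if (u \in K) && (v \in K) then qpt (p u) (p v) r1
  else if v \in K then p v else p u.

Definition Pext (p : T -> V) c := if c \in A then p c else place p (Nb Hg A c).

Lemma key a c : a \in A -> c \notin A -> Hg c a ->
  sqdist (Pext py c) (Pext py a) = sqdist (Pext px c) (Pext px a).
Proof.
move=> aA cA h.
rewrite /Pext (negbTE cA) aA.
have aK : a \in Nb Hg A c.
  rewrite inE aA /=; apply/existsP; exists c; rewrite reach_id h //.
rewrite /place; case: pickP => [w /andP [wK /andP [wu wv]]|none].
  case: (eqVneq w a) => [->|wa]; first by rewrite !sqdistxx.
  have hwa := nbr_clique (Hg_sym u v gsym) Aat cA wK aK wa.
  have gwa : g w a.
    apply/negPn/negP => ng; have := Hg_notg hwa ng.
    by rewrite (negbTE wu) (negbTE wv).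
  have wA : w \in A by move: wK; rewrite inE => /andP [].
  by rewrite Rx // Ry.
have auv : (a == u) || (a == v).
  by have := none a; rewrite aK /= => /negbT; rewrite negb_and !negbK.
case: (boolP ((u \in Nb Hg A c) && (v \in Nb Hg A c))) => [_|nuv].
  case/orP: auv => /eqP ->; first by rewrite !qpt_u.
  by rewrite !qpt_v /r1; field.
case vK: (v \in Nb Hg A c).
  case/orP: auv => /eqP ea; last by rewrite ea !sqdistxx.
  have uK : u \in Nb Hg A c by move: aK; rewrite ea.
  by move: nuv; rewrite uK vK.
case/orP: auv => /eqP ea; first by rewrite ea !sqdistxx.
have vK' : v \in Nb Hg A c by move: aK; rewrite ea.
by move: vK; rewrite vK'.
Qed.

Lemma same_nb c c' : c \notin A -> c' \notin A -> Hg c c' -> Nb Hg A c = Nb Hg A c'.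
Proof.
move=> cA c'A h.
have cc : connect (restr (~: A) Hg) c c'.
  by apply: connect1; rewrite /restr !inE cA c'A h.
have E : reach Hg (~: A) c = reach Hg (~: A) c'.
  apply/setP => y; rewrite !inE; apply/idP/idP => hy.
    by apply: connect_trans hy; rewrite (connect_restr_sym (Hg_sym u v gsym)).
  by apply: connect_trans hy.
by rewrite /Nb E.
Qed.

Lemma forward x y z : SIP R d [set: T] g u v ->
  (forall a b, 0 <= l a b) -> (forall a b, l a b = l b a) ->
  sqdist (px u) (px v) = x -> sqdist (py u) (py v) = y -> x <= z <= y ->
  Omega d A g l u v z.
Proof.
move=> hS l0 ls ex ey xz.
pose l' a b := if (a \in A) && (b \in A) then l a b else sqdist (Pext px a) (Pext px b).
have Rx' : forall a b, a \in [set: T] -> b \in [set: T] -> g a b ->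
    sqdist (Pext px a) (Pext px b) = l' a b.
  move=> a b _ _ gab; rewrite /l'; case: ifP => [/andP [aA bA]|//].
  by rewrite /Pext aA bA; apply: Rx.
have Ry' : forall a b, a \in [set: T] -> b \in [set: T] -> g a b ->
    sqdist (Pext py a) (Pext py b) = l' a b.
  move=> a b _ _ gab; rewrite /l'.
  case aA: (a \in A); case bA: (b \in A) => /=.
  - by rewrite /Pext aA bA; apply: Ry.
  - rewrite sqdist_sym [RHS]sqdist_sym; apply: key => //; first by rewrite bA.
    by rewrite (Hg_sym u v gsym); apply: (Hg_g u v).
  - by apply: key => //; [rewrite aA | apply: (Hg_g u v)].
  - rewrite /Pext aA bA (same_nb (negbT aA) (negbT bA) (Hg_g u v gab)).
    by rewrite !sqdistxx.
have l0' : forall a b, 0 <= l' a b.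
  by move=> a b; rewrite /l'; case: ifP => _; [apply: l0 | apply: sqdist_ge0].
have ls' : forall a b, l' a b = l' b a.
  by move=> a b; rewrite /l' andbC; case: ifP => _; [apply: ls | apply: sqdist_sym].
have ox : Omega d [set: T] g l' u v x.
  by exists (Pext px); split => //; rewrite /Pext uA vA.
have oy : Omega d [set: T] g l' u v y.
  by exists (Pext py); split => //; rewrite /Pext uA vA.
have [p [Rp pz]] := hS l' l0' ls' x y z ox oy xz.
exists p; split => // a b aA bA gab.
by rewrite Rp ?inE // /l' aA bA.
Qed.
End F2.
End Forward.

Unset Implicit Arguments.
Theorem mainTheorem9 (R : realType) (d : nat) (T : finType) (g : rel T) (u v : T) :
  (1 <= d)%N -> symmetric g -> irreflexive g -> u != v -> ~~ g u v ->
  (SIP R d [set: T] g u v <->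
   (forall A : {set T}, atom_of (add_edge g u v) A -> u \in A -> v \in A ->
      SIP R d A (del_edge (add_edge g u v) u v) u v)).
Proof.
move=> d1 gsym irr uv nguv; split.
  move=> hS A Aat uA vA l l0 ls x y z ox oy xz.
  have E1 : forall a b, del_edge (add_edge g u v) u v a b = g a b by apply: (del_addE gsym nguv).
  have E2 : forall a b, g a b = del_edge (add_edge g u v) u v a b by move=> a b; rewrite E1.
  have [px [Rx ex]] := Omega_ext E1 ox.
  have [py [Ry ey]] := Omega_ext E1 oy.
  apply: Omega_ext E2 _.
  exact: (forward d1 gsym Aat uA vA Rx Ry hS l0 ls ex ey xz).
move=> hA l l0 ls x y z ox oy xz.
have [p [Rp pe]] := ox.
apply: (glue_main gsym (W := [set: T]) (p := p)) => //.
move=> A At _ uA vA.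
have [A' [mA' AA']] := maxatom_ext At (subsetT A).
move/maxatom_T: mA' => aA'.
have uA' := subsetP AA' u uA; have vA' := subsetP AA' v vA.
have E1 : forall a b, del_edge (add_edge g u v) u v a b = g a b by apply: (del_addE gsym nguv).
have E2 : forall a b, g a b = del_edge (add_edge g u v) u v a b by move=> a b; rewrite E1.
have cv := hA A' aA' uA' vA' l l0 ls.
apply: (Omega_sub AA'); apply: Omega_ext E1 _.
apply: (cv x y z _ _ xz); apply: Omega_ext E2 _; apply: Omega_sub (subsetT A') _ => //.
Qed.
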